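(* Fix $s,z>0$ and define $$c_{s,z}=\min\Big\{\Big|1-\frac{s}{z}\Big|,1\Big\},\qquad t_{s,z}=(1+c_{s,z})s,$$ $$g_{s,z}(a)=\begin{cases}\max\{z-a,\min\{s-z,z\}\}&a\le s\\ 0&a>s,\end{cases}\qquad h_{s,z}(a)=\begin{cases}z& a\le c_{s,z}s\\ \frac{z}{s}\big(s-(a-c_{s,z}s)\big)& a>c_{s,z}s.\end{cases}$$ Then (i) $\displaystyle\int_0^{t_{s,z}}\frac{da}{1-\rho_Z(g_{s,z}(a))}=\mathbb{E}[T^{\mathrm{res}}_{\mathrm{SRPT\text{-}B}}(s,z)]+c_{s,z}s$; (ii) $\displaystyle\int_0^{t_{s,z}}\frac{da}{1-\rho_Z(h_{s,z}(a))}=\mathbb{E}[T^{\mathrm{res}}_{\mathrm{SRPT\text{-}SE}}(s,z)]+c_{s,z}\,\mathbb{E}[T^{\mathrm{res}}_{\mathrm{PSJF\text{-}E}}(s,z)]$; (iii) $g_{s,z}(a)\le h_{s,z}(a)$ for all $a\in(0,t_{s,z})$.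
   Context: Model: M/G/1 queue (Poisson arrivals of rate $\lambda$, single preemptive server of rate 1) in which each job has i.i.d. (true size, estimated size) pair distributed as $(S,Z)$ with a joint density; $0<\rho=\lambda\mathbb{E}[S]<1$. $\rho_Z(x)=\lambda\mathbb{E}[S\mathbf{1}(Z\le x)]$ (so $\rho_Z(x)=0$ for $x\le0$). Policies are defined by rank functions on states $(s,z,a)$ (age $a$), the job of least rank being served: SRPT-B: $\min\{|z-a|,z\}$; SRPT-SE: $\frac{z}{s}(s-a)$; PSJF-E: $z$. Worst future rank: $w_\pi(s,z,a)=\sup_{b\in[a,s)}r_\pi(s,z,b)$. Residence time of a tagged job is the time from its first service to its completion; $T^{\mathrm{res}}_\pi(s,z)$ is the residence time under $\pi$ of a tagged job with true size $s$ and estimated size $z$ arriving in steady state. Known fact (cited, may be used): for $\pi\in\{\text{SRPT-B},\text{SRPT-SE},\text{PSJF-E}\}$, $\mathbb{E}[T^{\mathrm{res}}_\pi(s,z)]=\int_0^s\frac{da}{1-\rho_Z(w_\pi(s,z,a))}$. *)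

(* Defs.v *)
From HB Require Import structures.
From mathcomp Require Import all_boot all_order all_algebra.
From mathcomp Require Import all_classical all_reals all_analysis.
Set Implicit Arguments. Unset Strict Implicit. Unset Printing Implicit Defensive.
Import Order.TTheory GRing.Theory Num.Theory.
Import numFieldNormedType.Exports.
Local Open Scope classical_set_scope.
Local Open Scope ring_scope.

(* The joint law of a job's (true size S, estimated size Z) is a probability
   measure [mu] on R * R; a point p of R * R is read as p = (S, Z). *)

Definition rhoZ (R : realType) (mu : {measure set (R * R)%type -> \bar R})
  (lam x : R) : R :=
  lam * fine (\int[mu]_(p in [set p : R * R | (p.2 <= x)%R]) (p.1)%:E)%E.

Inductive policy := SRPT_B | SRPT_SE | PSJF_E.

Definition rank (R : realType) (pi : policy) (s z a : R) : R :=
  match pi with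
  | SRPT_B => Num.min `|z - a| z
  | SRPT_SE => z / s * (s - a)
  | PSJF_E => z
  end.

Definition worst_rank (R : realType) (pi : policy) (s z a : R) : R :=
  sup [set rank pi s z b | b in `[a, s[%classic].

(* Expected residence time E[T^res_pi(s, z)], given by the cited known
   formula  int_0^s da / (1 - rho_Z(w_pi(s, z, a))). *)
Definition ETres (R : realType) (mu : {measure set (R * R)%type -> \bar R})
  (lam : R) (pi : policy) (s z : R) : \bar R :=
  (\int[lebesgue_measure]_(a in `[0%R, s]%classic)
     ((1 - rhoZ mu lam (worst_rank pi s z a))^-1)%:E)%E.

Definition c_sz (R : realType) (s z : R) : R := Num.min `|1 - s / z| 1.
Definition t_sz (R : realType) (s z : R) : R := (1 + c_sz s z) * s.

Definition g_sz (R : realType) (s z a : R) : R :=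
  if a <= s then Num.max (z - a) (Num.min (s - z) z) else 0.

Definition h_sz (R : realType) (s z a : R) : R :=
  if a <= c_sz s z * s then z
  else z / s * (s - (a - c_sz s z * s)).

Definition has_joint_density (R : realType)
  (mu : {measure set (R * R)%type -> \bar R}) : Prop :=
  exists f : R * R -> R,
    (forall p, 0 <= f p) /\ measurable_fun setT f /\
    forall A, measurable A ->
      mu A = (\int[(@lebesgue_measure R) \x (@lebesgue_measure R)]_(p in A) (f p)%:E)%E.

(* Main.v *)
Require Import Defs.
From HB Require Import structures.
From mathcomp Require Import all_boot all_order all_algebra.
From mathcomp Require Import all_classical all_reals all_analysis.
From mathcomp Require Import ring lra measurable_realfun.
Import Order.TTheory GRing.Theory Num.Theory.
Import numFieldNormedType.Exports.
Local Open Scope classical_set_scope.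
Local Open Scope ring_scope.
Lemma sup_eqv (R : realType) (E : set R) v :
  (forall x, E x -> x <= v) -> (forall e, 0 < e -> exists2 x, E x & v - e < x) ->
  sup E = v.
Proof.
move=> ub ap.
have E0 : E !=set0 by have [x Ex _] := ap 1 ltr01; exists x.
have ubv : ubound E v by move=> x /ub.
apply/eqP; rewrite eq_le (ge_sup E0 ubv) /=.
rewrite leNgt; apply/negP => H.
have [x Ex] := ap (v - sup E) ltac:(by rewrite subr_gt0).
rewrite opprB addrCA subrr addr0 => Hx.
have : x <= sup E by apply: ub_le_sup => //; exists v.
by rewrite leNgt Hx.
Qed.
Lemma meas_fst_le (R : realType) (x : R) : measurable [set p : R * R | p.1 <= x].
Proof.
have := @measurable_fst _ _ R R measurableT _ (@measurable_itv R `]-oo, x]).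
move=> H; rewrite (_ : [set p : R * R | p.1 <= x] = [set: R * R] `&` fst @^-1` `]-oo, x]); first exact: H.
by apply/seteqP; split => p /=; rewrite in_itv /= ?andbT //; case.
Qed.

Lemma meas_snd_le (R : realType) (x : R) : measurable [set p : R * R | p.2 <= x].
Proof.
have := @measurable_snd _ _ R R measurableT _ (@measurable_itv R `]-oo, x]).
move=> H; rewrite (_ : [set p : R * R | p.2 <= x] = [set: R * R] `&` snd @^-1` `]-oo, x]); first exact: H.
by apply/seteqP; split => p /=; rewrite in_itv /= ?andbT //; case.
Qed.

Lemma mfst_E (R : realType) (D : set (R * R)) :
  measurable_fun D (fun p : R * R => (p.1)%:E).
Proof. apply/measurable_EFinP; apply: measurable_funTS; exact: measurable_fst. Qed.

Lemma int_negl (R : realType) (mu : {measure set (R * R)%type -> \bar R})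
  (A : set (R * R)) : measurable A -> mu [set p : R * R | p.1 <= 0] = 0%E ->
  (\int[mu]_(p in A) (p.1)%:E = \int[mu]_(p in A `\` [set p : R * R | (p.1 <= 0)%R]) (p.1)%:E)%E.
Proof.
move=> mA N0; set N := [set p : R * R | p.1 <= 0].
have mN : measurable N by exact: meas_fst_le.
have AE : A = (A `\` N) `|` (A `&` N).
  apply/seteqP; split => p.
    by move=> Ap; have [Np|Np] := pselect (N p); [right|left].
  by case => -[].
have mAN : measurable (A `\` N) by exact: measurableD.
have mAN' : measurable (A `&` N) by exact: measurableI.
have disj : [disjoint A `\` N & A `&` N].
  by rewrite disj_set2E; apply/eqP/seteqP; split => p // [[_ ?] [_ ?]].
have N0' : mu (A `&` N) = 0%E.
  by apply: (subset_measure0 _ _ _ N0) => //; exact: subIsetr.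
rewrite [in LHS]AE (integral_setU _ mAN mAN' (mfst_E _ _) disj).
have := @null_set_integral _ _ R mu (A `&` N) (fun p : R * R => (p.1)%:E) mAN' (mfst_E _ _) N0'.
by move=> ->; rewrite adde0.
Qed.
Lemma rho_props (R : realType) (mu : probability (R * R)%type R) (lam : R) :
  0 < lam -> mu [set p : R*R | p.1 <= 0] = 0%E -> mu [set p : R*R | p.2 <= 0] = 0%E ->
  (lam%:E * \int[mu]_(p in setT) (p.1)%:E < 1%:E)%E ->
  [/\ (forall x, 0 <= rhoZ mu lam x), (forall x, rhoZ mu lam x < 1),
      (forall x y, x <= y -> rhoZ mu lam x <= rhoZ mu lam y) & rhoZ mu lam 0 = 0].
Proof.
move=> lam0 N0 Z0 lt1.
set N := [set p : R * R | p.1 <= 0].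
have mN : measurable N by exact: meas_fst_le.
pose I (x : R) := (\int[mu]_(p in [set p : R*R | (p.2 <= x)%R] `\` N) (p.1)%:E)%E.
have rhoE x : rhoZ mu lam x = lam * fine (I x).
  by rewrite /rhoZ int_negl //; exact: meas_snd_le.
pose E := (\int[mu]_(p in setT `\` N) (p.1)%:E)%E.
have EE : (\int[mu]_(p in setT) (p.1)%:E)%E = E by rewrite int_negl.
have pos : forall p, (setT `\` N) p -> (0 <= (p.1)%:E)%E.
  move=> p [_ /negP]; rewrite /N /= -ltNge lee_fin => /ltW //.
have mfE : measurable_fun (setT `\` N) (fun p : R * R => (p.1)%:E) by exact: mfst_E.
have mT : measurable (setT `\` N) by exact: measurableD.
have mI x : measurable ([set p : R*R | p.2 <= x] `\` N).
  by apply: measurableD => //; exact: meas_snd_le.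
have Ile x y : x <= y -> (I x <= I y)%E.
  move=> xy; apply: ge0_subset_integral => //.
  - exact: mfst_E.
  - by move=> p [? ?]; apply: pos.
  - by move=> p [/= px Np]; split => //=; exact: le_trans xy.
have I0 x : (0 <= I x)%E by apply: integral_ge0 => p [_ ?]; apply: pos.
have IE x : (I x <= E)%E.
  by apply: ge0_subset_integral => // p [_ Np].
have E0 : (0 <= E)%E by apply: integral_ge0.
have Eoo : (E < +oo)%E.
  rewrite ltNge leye_eq; apply/negP => /eqP Einf.
  by move: lt1; rewrite EE Einf gt0_muley ?lte_fin.
have Efin : E \is a fin_num by rewrite ge0_fin_numE.
have Ifin x : I x \is a fin_num by rewrite ge0_fin_numE // (le_lt_trans (IE x)).
have lt1' : lam * fine E < 1.
  by move: lt1; rewrite EE -(fineK Efin) -EFinM lte_fin.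
split.
- by move=> x; rewrite rhoE; apply: mulr_ge0; [exact: ltW | exact: fine_ge0].
- move=> x; rewrite rhoE; apply: le_lt_trans lt1'.
  by apply: ler_wpM2l; [exact: ltW | exact: fine_le].
- move=> x y xy; rewrite !rhoE; apply: ler_wpM2l; first exact: ltW.
  exact: fine_le (Ile _ _ xy).
- rewrite /rhoZ.
  have := @null_set_integral _ _ R mu [set p : R * R | p.2 <= 0] (fun p : R * R => (p.1)%:E) (@meas_snd_le R 0) (mfst_E _ _) Z0.
  by move=> ->; rewrite mulr0.
Qed.
Ltac mm := repeat match goal with
 | |- context [`|?x|] => let h := fresh in have [h|h] := leP 0 x;
     [rewrite (ger0_norm h); move: h | rewrite (ltr0_norm h); move: h]
 | |- context [@Order.min _ _ ?x ?y] => let h := fresh in have [h|h] := leP x y; move: h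
 | |- context [@Order.max _ _ ?x ?y] => let h := fresh in have [h|h] := leP x y; move: h
 end; move=> *.

Lemma wB (R : realType) (s z a : R) : 0 < s -> 0 < z -> 0 <= a < s ->
  worst_rank SRPT_B s z a = Num.max (z - a) (Num.min (s - z) z).
Proof.
move=> s0 z0 /andP[a0 as_]; rewrite /worst_rank; apply: sup_eqv.
- move=> x [b]; rewrite /= in_itv /= => /andP[ab bs] <-; rewrite /rank.
  by mm; lra.
- move=> e e0.
  have [H|H] := leP (Num.min (s - z) z) (z - a).
    exists (rank SRPT_B s z a); first by exists a => //; rewrite /= in_itv /= lexx as_.
    by move: H; rewrite /rank; mm; lra.
  pose b := Num.max a (s - Num.min e (s - z) / 2).
  exists (rank SRPT_B s z b).
    exists b => //; rewrite /= in_itv /=; apply/andP; split;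
    by move: H; rewrite /b; mm; lra.
  by move: H; rewrite /rank /b; mm; lra.
Qed.

Lemma wSE (R : realType) (s z a : R) : 0 < s -> 0 < z -> a < s ->
  worst_rank SRPT_SE s z a = z / s * (s - a).
Proof.
move=> s0 z0 as_; rewrite /worst_rank; apply: sup_eqv.
- move=> x [b]; rewrite /= in_itv /= => /andP[ab bs] <-; rewrite /rank.
  by apply: ler_wpM2l; [rewrite divr_ge0 // ltW | lra].
- move=> e e0; exists (rank SRPT_SE s z a); first by exists a => //; rewrite /= in_itv /= lexx as_.
  rewrite /rank; lra.
Qed.

Lemma wP (R : realType) (s z a : R) : a < s ->
  worst_rank PSJF_E s z a = z.
Proof.
move=> as_; rewrite /worst_rank; apply: sup_eqv.
- by move=> x [b] _ <-.
- move=> e e0; exists (rank PSJF_E s z a); first by exists a => //; rewrite /= in_itv /= lexx as_.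
  rewrite /rank; lra.
Qed.
Lemma cz_eq (R : realType) (s z : R) : 0 < s -> 0 < z ->
  c_sz s z * z = Num.min `|s - z| z.
Proof.
move=> s0 z0; rewrite /c_sz.
have qz : s / z * z = s by rewrite divfK // gt_eqF.
set q := s / z in qz *.
have -> : s - z = (q - 1) * z by rewrite mulrBl qz mul1r.
mm; nra.
Qed.

Lemma part3 (R : realType) (s z a : R) : 0 < s -> 0 < z -> 0 < a < t_sz s z ->
  g_sz s z a <= h_sz s z a.
Proof.
move=> s0 z0 /andP[a0 at_].
have cz := @cz_eq R s z s0 z0.
rewrite /g_sz /h_sz; rewrite /t_sz in at_.
have c0 : 0 <= c_sz s z by rewrite /c_sz; mm; lra.
have c1 : c_sz s z <= 1 by rewrite /c_sz; mm; lra.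
set c := c_sz s z in cz c0 c1 at_ *.
have hE : z / s * (s - (a - c * s)) = z + c * z - z / s * a.
  by field; rewrite gt_eqF.
rewrite hE.
have ks : z / s * s = z by rewrite divfK // gt_eqF.
have k0 : 0 < z / s by rewrite divr_gt0.
set k := z / s in ks k0 *.
move: cz; have [as_|as_] := leP a s; have [acs|acs] := leP a (c * s); mm; nra.
Qed.
Lemma shift_lebesgue (R : realType) (c : R) (A : set R) : measurable A ->
  pushforward (@lebesgue_measure R) (fun r : R => r + c) A = lebesgue_measure A.
Proof.
move=> mA.
have mphi : measurable_fun setT (fun r : R => r + c).
  by apply: measurable_funD => //; exact: measurable_cst.
have := (@lebesgue_measure_unique R (pushforward (@lebesgue_measure R) ((fun r : R => r + c) : _ -> measurableTypeR R))).
move=> /(_ mphi) H; apply/esym; apply: H => // _ [[a b]] _ <-.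
rewrite /pushforward /=.
rewrite [RHS](_ : _ = lebesgue_measure `]a - c, b - c]%classic); last first.
  congr (lebesgue_measure _).
  apply/seteqP; split=> r /=; rewrite !in_itv/= => /andP[? ?]; apply/andP; split; lra.
rewrite !lebesgue_measure_itv /= !lte_fin ltrD2r.
case: ifP => // _; rewrite -!EFinB; congr EFin; lra.
Qed.

Lemma shift_int (R : realType) (f : R -> \bar R) (c x y : R) :
  measurable_fun `]x + c, y + c] f -> (forall a, 0 <= f a)%E ->
  (\int[lebesgue_measure]_(a in `](x + c)%R, (y + c)%R]) f a =
   \int[lebesgue_measure]_(a in `]x, y]) f (a + c)%R)%E.
Proof.
move=> mf f0.
have mphi : measurable_fun setT (fun r : R => r + c).
  by apply: measurable_funD => //; exact: measurable_cst.
have -> : `]x, y]%classic = (fun r : R => r + c) @^-1` `]x + c, y + c]%classic.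
  apply/seteqP; split=> r /=; rewrite !in_itv/= => /andP[? ?]; apply/andP; split; lra.
rewrite -(@ge0_integral_pushforward _ _ (measurableTypeR R) (measurableTypeR R) R (fun r => (r + c)%R) mphi lebesgue_measure _ f (measurable_itv _) mf (fun a _ => f0 a)).
apply: eq_measure_integral => A mA _.
change (lebesgue_measure A = lebesgue_measure ((fun r : R => (r + c)%R) @^-1` A)).
by have := @shift_lebesgue R c A mA; rewrite /pushforward => ->.
Qed.
Lemma itv_split (R : realType) (x y w : R) : x <= y -> y <= w ->
  `[x, w]%classic = `[x, y]%classic `|` `]y, w]%classic.
Proof.
move=> xy yw; apply/seteqP; split => a /=; rewrite !in_itv /=.
  move=> /andP[xa aw]; have [ay|ya] := leP a y; [left|right]; apply/andP; split => //.
by case=> /andP[? ?]; apply/andP; split; lra.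
Qed.

Lemma itv_disj (R : realType) (x y w : R) :
  [disjoint `[x, y]%classic & `]y, w]%classic].
Proof.
rewrite disj_set2E; apply/eqP/seteqP; split => a //=; rewrite !in_itv /=.
by move=> [/andP[_ ?] /andP[? _]]; lra.
Qed.

Lemma mF (R : realType) (rho k : R -> R) (D : set R) : measurable D ->
  (forall x y, x <= y -> rho x <= rho y) -> (forall x, rho x < 1) ->
  (forall x y, x <= y -> k y <= k x) ->
  measurable_fun D (fun a => ((1 - rho (k a))^-1)%:E).
Proof.
move=> mD rM r1 kM; apply/measurable_EFinP; apply: nonincreasing_measurable => // x y xy.
rewrite lef_pV2 ?posrE ?subr_gt0 //.
by rewrite lerB // rM // kM.
Qed.

Lemma F_ge0 (R : realType) (rho : R -> R) x : rho x < 1 ->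
  (0 <= ((1 - rho x)^-1)%:E)%E.
Proof. by move=> r1; rewrite lee_fin ltW // invr_gt0 subr_gt0. Qed.

Lemma g_noninc (R : realType) (s z : R) : 0 < s -> 0 < z ->
  forall x y, x <= y -> g_sz s z y <= g_sz s z x.
Proof.
move=> s0 z0 x y xy; rewrite /g_sz.
have [ys|ys] := leP y s; have [xs|xs] := leP x s; mm; lra.
Qed.

Lemma h_noninc (R : realType) (s z : R) : 0 < s -> 0 < z ->
  forall x y, x <= y -> h_sz s z y <= h_sz s z x.
Proof.
move=> s0 z0 x y xy; rewrite /h_sz.
have hE v : z / s * (s - (v - c_sz s z * s)) = z / s * s + z / s * (c_sz s z * s) - z / s * v.
  by ring.
rewrite !hE.
have k0 : 0 < z / s by rewrite divr_gt0.
set k := z / s in k0 *; set c := c_sz s z.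
have ky : k * x <= k * y by rewrite ler_pM2l.
have [ys|ys] := leP y (c * s); have [xs|xs] := leP x (c * s); try lra.
- have : k * (c * s) <= k * y by rewrite ler_pM2l // ltW.
  have : k * s = z by rewrite /k divfK // gt_eqF.
  lra.
Qed.
Lemma part1 (R : realType) (rho : R -> R) (s z : R) : 0 < s -> 0 < z ->
  (forall x, rho x < 1) -> (forall x y, x <= y -> rho x <= rho y) -> rho 0 = 0 ->
  (\int[lebesgue_measure]_(a in `[0%R, ((1 + c_sz s z) * s)%R])
      ((1 - rho (g_sz s z a))^-1)%:E =
   \int[lebesgue_measure]_(a in `[0%R, s])
      ((1 - rho (worst_rank SRPT_B s z a))^-1)%:E + (c_sz s z * s)%:E)%E.
Proof.
move=> s_gt0 z_gt0 r1 rM rz0.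
have c0 : 0 <= c_sz s z by rewrite /c_sz; mm; lra.
have gM := @g_noninc R s z s_gt0 z_gt0.
have F0 x : (0 <= ((1 - rho x)^-1)%:E)%E := @F_ge0 R rho x (r1 x).
have Frho0 : (1 - rho 0)^-1 = 1 by rewrite rz0 subr0 invr1.
have ts : (1 + c_sz s z) * s = s + c_sz s z * s by ring.
have cs0 : 0 <= c_sz s z * s by rewrite mulr_ge0 // ltW.
have sp : s <= s + c_sz s z * s by rewrite lerDl.
rewrite ts (@itv_split _ 0 s (s + c_sz s z * s) (ltW s_gt0) sp).
rewrite ge0_integral_setU //; last first.
- exact: itv_disj.
- by apply: mF => //; exact: measurableU.
have -> : (\int[lebesgue_measure]_(a in `]s, (s + c_sz s z * s)%R]) ((1 - rho (g_sz s z a))^-1)%:E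
    = (c_sz s z * s)%:E)%E.
  rewrite (eq_integral (cst 1%:E)); last first.
    by move=> a; rewrite inE /= in_itv /= => /andP[sa _]; rewrite /g_sz leNgt sa /= Frho0.
  rewrite integral_cst //= lebesgue_measure_itv /= lte_fin mul1e.
  case: ifPn => H; first by rewrite -EFinD; congr EFin; ring.
  have -> : c_sz s z * s = 0.
    by move: H; rewrite -leNgt gerDl => H; apply/eqP; rewrite eq_le H cs0.
  done.
congr (_ + _)%E.
have eqB : {in `[0%R, s[%classic, (fun a => ((1 - rho (g_sz s z a))^-1)%:E) =1
    (fun a => ((1 - rho (worst_rank SRPT_B s z a))^-1)%:E)}.
  move=> a; rewrite inE /= in_itv /= => /andP[a0 as_].
  by rewrite wB ?a0 ?as_ // /g_sz (ltW as_).
have mg : measurable_fun `[0%R, s[%classic (fun a => ((1 - rho (g_sz s z a))^-1)%:E).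
  exact: mF.
rewrite -!integral_itv_bndo_bndc //; last exact: eq_measurable_fun mg.
exact: eq_integral.
Qed.
Lemma part2 (R : realType) (rho : R -> R) (s z : R) : 0 < s -> 0 < z ->
  (forall x, rho x < 1) -> (forall x y, x <= y -> rho x <= rho y) ->
  (\int[lebesgue_measure]_(a in `[0%R, ((1 + c_sz s z) * s)%R])
      ((1 - rho (h_sz s z a))^-1)%:E =
   \int[lebesgue_measure]_(a in `[0%R, s])
      ((1 - rho (worst_rank SRPT_SE s z a))^-1)%:E +
   (c_sz s z)%:E *
   \int[lebesgue_measure]_(a in `[0%R, s])
      ((1 - rho (worst_rank PSJF_E s z a))^-1)%:E)%E.
Proof.
move=> s0 z0 r1 rM.
have c0 : 0 <= c_sz s z by rewrite /c_sz; mm; lra.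
have hM := @h_noninc R s z s0 z0.
have F0 x : (0 <= ((1 - rho x)^-1)%:E)%E := @F_ge0 R rho x (r1 x).
have cs0 : 0 <= c_sz s z * s by rewrite mulr_ge0 // ltW.
have ts : (1 + c_sz s z) * s = s + c_sz s z * s by ring.
have sp : c_sz s z * s <= s + c_sz s z * s by rewrite lerDr ltW.
rewrite ts (@itv_split _ 0 (c_sz s z * s) (s + c_sz s z * s) cs0 sp).
rewrite ge0_integral_setU //; last first.
- exact: itv_disj.
- by apply: mF => //; exact: measurableU.
set Fz := (1 - rho z)^-1.
have E1 : (\int[lebesgue_measure]_(a in `[0%R, (c_sz s z * s)%R]) ((1 - rho (h_sz s z a))^-1)%:E
    = (Fz * (c_sz s z * s))%:E)%E.
  rewrite (eq_integral (cst Fz%:E)); last first.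
    by move=> a; rewrite inE /= in_itv /= => /andP[_ a1]; rewrite /h_sz a1.
  rewrite integral_cst //= lebesgue_measure_itv /= lte_fin.
  case: ifPn => H; first by rewrite sube0 -EFinM.
  have -> : c_sz s z * s = 0 by move: H; rewrite -leNgt => H; apply/eqP; rewrite eq_le H cs0.
  by rewrite mule0 mulr0.
have mSE : measurable_fun [set: R] (fun a : R => ((1 - rho (z / s * (s - a)))^-1)%:E).
  apply: mF => // x y xy; apply: ler_wpM2l; [by rewrite divr_ge0 // ltW | lra].
have E2 : (\int[lebesgue_measure]_(a in `](c_sz s z * s)%R, (s + c_sz s z * s)%R]) ((1 - rho (h_sz s z a))^-1)%:E
    = \int[lebesgue_measure]_(a in `[0%R, s]) ((1 - rho (worst_rank SRPT_SE s z a))^-1)%:E)%E.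
  rewrite (_ : `]c_sz s z * s, (s + c_sz s z * s)%R]%classic = `](0 + c_sz s z * s)%R, (s + c_sz s z * s)%R]%classic); last by rewrite add0r.
  rewrite shift_int //; last by apply: mF.
  transitivity (\int[lebesgue_measure]_(a in `]0%R, s]) ((1 - rho (z / s * (s - a)))^-1)%:E)%E.
    apply: eq_integral => a; rewrite inE /= in_itv /= => /andP[a0 _]; rewrite /h_sz.
    have -> : (a + c_sz s z * s <= c_sz s z * s) = false by rewrite gerDr leNgt a0.
    by rewrite addrK.
  rewrite integral_itv_obnd_cbnd; last exact: measurable_funS mSE.
  have eqSE : {in `[0%R, s[%classic, (fun a : R => ((1 - rho (z / s * (s - a)))^-1)%:E) =1
      (fun a => ((1 - rho (worst_rank SRPT_SE s z a))^-1)%:E)}.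
    by move=> a; rewrite inE /= in_itv /= => /andP[a0 as_]; rewrite wSE.
  have mg : measurable_fun `[0%R, s[%classic (fun a : R => ((1 - rho (z / s * (s - a)))^-1)%:E).
    exact: measurable_funS mSE.
  rewrite -!integral_itv_bndo_bndc //; last exact: eq_measurable_fun mg.
  exact: eq_integral.
have E3 : (\int[lebesgue_measure]_(a in `[0%R, s]) ((1 - rho (worst_rank PSJF_E s z a))^-1)%:E
    = (Fz * s)%:E)%E.
  have eqP' : {in `[0%R, s[%classic, (fun a => ((1 - rho (worst_rank PSJF_E s z a))^-1)%:E) =1
      cst Fz%:E}.
    by move=> a; rewrite inE /= in_itv /= => /andP[a0 as_]; rewrite wP.
  rewrite -integral_itv_bndo_bndc; last first.
    apply: eq_measurable_fun (measurable_cst _) => a Ha; by rewrite eqP'.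
  rewrite (eq_integral (cst Fz%:E)); last exact: eqP'.
  rewrite integral_cst //= lebesgue_measure_itv /= lte_fin s0.
  by rewrite sube0 -EFinM.
rewrite E1 E2 E3 addeC -EFinM; congr (_ + EFin _); ring.
Qed.
Theorem mainTheorem6 (R : realType) (mu : probability (R * R)%type R) (lam : R)
  (lam_gt0 : 0 < lam)
  (dens : has_joint_density mu)
  (S_pos : mu [set p : R * R | p.1 <= 0] = 0%E)
  (Z_pos : mu [set p : R * R | p.2 <= 0] = 0%E)
  (rho_lt1 : (lam%:E * \int[mu]_(p in setT) (p.1)%:E < 1%:E)%E)
  (s z : R) (s_gt0 : 0 < s) (z_gt0 : 0 < z) :
  [/\ (\int[lebesgue_measure]_(a in `[0%R, t_sz s z]%classic)
         ((1 - rhoZ mu lam (g_sz s z a))^-1)%:E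
       = ETres mu lam SRPT_B s z + (c_sz s z * s)%:E)%E,
      (\int[lebesgue_measure]_(a in `[0%R, t_sz s z]%classic)
         ((1 - rhoZ mu lam (h_sz s z a))^-1)%:E
       = ETres mu lam SRPT_SE s z + (c_sz s z)%:E * ETres mu lam PSJF_E s z)%E
    & forall a : R, 0 < a < t_sz s z -> g_sz s z a <= h_sz s z a].
Proof.
have [r0 r1 rM rz0] := @rho_props R mu lam lam_gt0 S_pos Z_pos rho_lt1.
split.
- by rewrite /ETres /t_sz; apply: part1.
- by rewrite /ETres /t_sz; apply: part2.
- by move=> a; apply: part3.
Qed.
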